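(* Let $P$ be a poset, $f$ a downward closure operator on $P$, and $x,y\in P$ with $x<y$. Assume $f^{-1}(x)=\{x\}$. Then \[ |(x,y)_P|\simeq\begin{cases}|(x,y)_{\operatorname{Fix} f}| & \text{if } y\in\operatorname{Fix} f,\\ \mathrm{pt} & \text{otherwise.}\end{cases}\]
   Context: A downward closure operator on a poset $P$ is an order-preserving map $f:P\to P$ with $f(z)\le z$ for all $z\in P$ and $f\circ f=f$. $\operatorname{Fix} f=\{z\in P: f(z)=z\}$, regarded as a poset with the restricted order. For a poset $Q$, $|Q|$ is the geometric realization of its order complex (simplices are finite nonempty chains), and $(x,y)_Q=\{z\in Q:x<z<y\}$. $\simeq$ denotes homotopy equivalence and $\mathrm{pt}$ the one-point space. *)

(* Defs.v *)
From HB Require Import structures.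
From mathcomp Require Import all_boot all_order all_algebra.
From mathcomp Require Import all_classical all_reals topology normedtype.
Set Implicit Arguments. Unset Strict Implicit. Unset Printing Implicit Defensive.
Import Order.TTheory GRing.Theory Num.Theory.
Import numFieldNormedType.Exports.
Local Open Scope classical_set_scope.
Local Open Scope ring_scope.

Definition downward_closure {d} {P : porderType d} (f : P -> P) : Prop :=
  [/\ {homo f : a b / (a <= b)%O},
      (forall z : P, (f z <= z)%O) &
      (forall z : P, f (f z) = f z)].

(* Fix f, as a subset of P (its order is the restricted order of P). *)
Definition Fix {d} {P : porderType d} (f : P -> P) : set P := [set z | f z = z].

Definition open_interval {d} {P : porderType d} (Q : set P) (x y : P) : set P :=
  [set z | Q z /\ (x < z)%O /\ (z < y)%O].

Definition is_chain {d} {P : porderType d} (s : seq P) : Prop :=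
  forall a b, a \in s -> b \in s -> (a <= b)%O \/ (b <= a)%O.

(* Geometric realization of the order complex of a subposet S of P.        *)
Section Realization.
Variables (R : realType) (d : Order.disp_t) (P : porderType d) (S : set P).

Definition supported_on (s : seq P) (alpha : P -> R) : Prop :=
  forall p, p \notin s -> alpha p = 0.

Definition in_realization (alpha : P -> R) : Prop :=
  (forall p, 0 <= alpha p) /\
  exists s : seq P, [/\ uniq s, (forall p, p \in s -> S p), is_chain s,
                        supported_on s alpha & \sum_(p <- s) alpha p = 1].

Definition realization := {alpha : P -> R | in_realization alpha}.

HB.instance Definition _ := gen_eqMixin realization.
HB.instance Definition _ := gen_choiceMixin realization.

(* Weak (coherent) topology: U is open iff its trace on every closed simplex
   (spanned by a finite chain c of S) is open for the Euclidean topology of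
   that simplex. *)
Definition weak_open (U : set realization) : Prop :=
  forall (c : seq P), uniq c -> (forall p, p \in c -> S p) -> is_chain c ->
  forall a : realization, U a -> supported_on c (sval a) ->
  exists2 e : R, 0 < e &
    forall b : realization, supported_on c (sval b) ->
      (forall p, p \in c -> `|sval b p - sval a p| < e) -> U b.

Lemma weak_openT : weak_open setT.
Proof. by move=> c _ _ _ a _ _; exists 1 => //. Qed.

Lemma weak_openI : setI_closed weak_open.
Proof.
move=> U V oU oV c uc cS cc a [Ua Va] sa.
have [e1 e1p H1] := oU c uc cS cc a Ua sa.
have [e2 e2p H2] := oV c uc cS cc a Va sa.
exists (Num.min e1 e2); first by rewrite lt_min e1p e2p.
move=> b sb hb; split.
- by apply: H1 => // p pc; have := hb p pc; rewrite lt_min => /andP[].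
- by apply: H2 => // p pc; have := hb p pc; rewrite lt_min => /andP[].
Qed.

Lemma weak_open_bigU (I : Type) (F : I -> set realization) :
  (forall i, weak_open (F i)) -> weak_open (\bigcup_i F i).
Proof.
move=> oF c uc cS cc a [i _ Fia] sa.
have [e ep H] := oF i c uc cS cc a Fia sa.
by exists e => // b sb hb; exists i => //; apply: H.
Qed.

HB.instance Definition _ :=
  isOpenTopological.Build realization weak_openT weak_openI weak_open_bigU.

End Realization.

(* A homotopy is a map X x R -> Y continuous on X x [0,1] (product          *)
(* topology, restricted to the subspace X x [0,1]).                          *)
Definition homotopic (R : realType) (X Y : topologicalType) (g h : X -> Y) : Prop :=
  exists H : X * R -> Y,
    [/\ {within [set xt : X * R | 0 <= xt.2 <= 1], continuous H},
        (forall x, H (x, 0) = g x) &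
        (forall x, H (x, 1) = h x)].

Definition homotopy_equivalent (R : realType) (X Y : topologicalType) : Prop :=
  exists (g : X -> Y) (h : Y -> X),
    [/\ continuous g, continuous h,
        homotopic R (h \o g) idfun & homotopic R (g \o h) idfun].

Definition pt : Type := unit.
HB.instance Definition _ := gen_eqMixin pt.
HB.instance Definition _ := gen_choiceMixin pt.
Lemma pt_openT : (@setT (set pt)) setT. Proof. by []. Qed.
Lemma pt_openI : setI_closed (@setT (set pt)). Proof. by []. Qed.
Lemma pt_open_bigU (I : Type) (F : I -> set pt) :
  (forall i, setT (F i)) -> setT (\bigcup_i F i).
Proof. by []. Qed.
HB.instance Definition _ := isOpenTopological.Build pt pt_openT pt_openI pt_open_bigU.

(* Main.v *)
Require Import Defs.
From HB Require Import structures.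
From mathcomp Require Import all_boot all_order all_algebra.
From mathcomp Require Import all_classical all_reals topology normedtype.
From mathcomp Require Import ring lra.
Import numFieldNormedType.Exports.
Set Implicit Arguments. Unset Strict Implicit. Unset Printing Implicit Defensive.
Import Order.TTheory GRing.Theory Num.Theory.
Local Open Scope classical_set_scope.
Local Open Scope ring_scope.

Ltac mm := repeat match goal with
  | |- context[Order.max ?x ?y] => case: (leP x y)
  | |- context[Order.min ?x ?y] => case: (leP x y)
  end; intros.
Section W.
Variable R : realType.
Definition clampLU (L U x : R) : R := Num.min U (Num.max L x).
Definition wb (L U lo hi : R) : R := clampLU L U hi - clampLU L U lo.

Lemma clamp_mono L U x y : x <= y -> clampLU L U x <= clampLU L U y.
Proof. rewrite /clampLU; mm; lra. Qed.

Lemma wb_ge0 L U lo hi : lo <= hi -> 0 <= wb L U lo hi.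
Proof. move=> h; rewrite /wb subr_ge0; exact: clamp_mono. Qed.

Lemma wb_empty L U lo : wb L U lo lo = 0.
Proof. by rewrite /wb subrr. Qed.

Lemma clamp0 L U : 0 <= L -> L <= U -> clampLU L U 0 = L.
Proof. rewrite /clampLU; mm; lra. Qed.
Lemma clamp1 L U : L <= U -> U <= 1 -> clampLU L U 1 = U.
Proof. rewrite /clampLU; mm; lra. Qed.

Lemma wb_full L U : 0 <= L -> L <= U -> U <= 1 -> wb L U 0 1 = U - L.
Proof. by move=> *; rewrite /wb clamp0 ?clamp1. Qed.

Lemma wb_LL L lo hi : wb L L lo hi = 0.
Proof. have h x : clampLU L L x = L by rewrite /clampLU; mm; lra.
by rewrite /wb !h subrr. Qed.

Lemma wb_sum L U a b : 0 <= L -> L <= U -> U <= 1 ->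
  wb L U 0 a + wb L U a b + wb L U b 1 = U - L.
Proof. move=> *; rewrite /wb clamp0 ?clamp1 //; ring. Qed.

Lemma clamp_lip L U x L' U' x' :
  `|clampLU L U x - clampLU L' U' x'| <= `|L - L'| + `|U - U'| + `|x - x'|.
Proof.
rewrite /clampLU.
have h1 (a b a' b' : R) : `|Num.max a b - Num.max a' b'| <= `|a - a'| + `|b - b'|.
  by mm; repeat match goal with |- context[`|?z|] => case: (ler0P z) => ? end; lra.
have h2 (a b a' b' : R) : `|Num.min a b - Num.min a' b'| <= `|a - a'| + `|b - b'|.
  by mm; repeat match goal with |- context[`|?z|] => case: (ler0P z) => ? end; lra.
apply: le_trans (h2 _ _ _ _) _; have := h1 L x L' x'; lra.
Qed.

Lemma wb_lip L U lo hi L' U' lo' hi' :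
  `|wb L U lo hi - wb L' U' lo' hi'| <=
     (`|L - L'| + `|U - U'|) *+ 2 + `|lo - lo'| + `|hi - hi'|.
Proof.
rewrite /wb.
have -> : clampLU L U hi - clampLU L U lo - (clampLU L' U' hi' - clampLU L' U' lo') =
  (clampLU L U hi - clampLU L' U' hi') - (clampLU L U lo - clampLU L' U' lo') by ring.
apply: le_trans (ler_normB _ _) _.
have := clamp_lip L U hi L' U' hi'; have := clamp_lip L U lo L' U' lo'.
rewrite mulr2n; lra.
Qed.

Lemma wb_pos L U lo hi : L <= U -> 0 < wb L U lo hi -> lo < U /\ L < hi /\ lo < hi.
Proof. rewrite /wb /clampLU; mm; lra. Qed.

End W.

Section Band.
Variables (R : realType) (d : Order.disp_t) (P : porderType d).
Implicit Types (al : P -> R) (s : seq P).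

Definition Lw al s p := \sum_(q <- s | (q < p)%O) al q.
Definition Uw al s p := \sum_(q <- s | (q <= p)%O) al q.
Definition bterm al s (g0 g1 g2 : P -> P) (a b : R) (z p : P) : R :=
  wb (Lw al s p) (Uw al s p) 0 a * (g0 p == z)%:R
  + wb (Lw al s p) (Uw al s p) a b * (g1 p == z)%:R
  + wb (Lw al s p) (Uw al s p) b 1 * (g2 p == z)%:R.
Definition bandsum al s g0 g1 g2 a b (z : P) : R :=
  \sum_(p <- s) bterm al s g0 g1 g2 a b z p.

Lemma sum_sub al s (C C' : pred P) : (forall q, 0 <= al q) -> (forall q, C q -> C' q) ->
  \sum_(q <- s | C q) al q <= \sum_(q <- s | C' q) al q.
Proof.
move=> h0 hC; rewrite big_mkcond [X in _ <= X]big_mkcond; apply: ler_sum => q _.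
by case: (boolP (C q)) => [/hC ->|_] //; case: (C' q).
Qed.

Lemma UwL al s p : p \in s -> uniq s -> Uw al s p = Lw al s p + al p.
Proof.
move=> ps us; rewrite /Uw /Lw big_mkcond (bigD1_seq p) //= lexx.
rewrite [X in _ = X + _]big_mkcond (bigD1_seq p) //= ltxx add0r addrC; congr (_ + _).
rewrite [RHS]big_mkcond [LHS]big_mkcond; apply: eq_bigr => q _.
by rewrite lt_neqAle; case: (q != p).
Qed.

Lemma sum_ind (x : P) s (c : R) : uniq s ->
  \sum_(z <- s) c * (x == z)%:R = if x \in s then c else 0.
Proof.
elim: s => [|y s IH] /=; first by rewrite big_nil.
move=> /andP[ys us]; rewrite big_cons IH // in_cons.
case: (x =P y) => [->|_] /=; last by rewrite mulr0 add0r.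
by rewrite (negbTE ys) mulr1 addr0.
Qed.

Definition nz al := [pred q | al q != 0].

Lemma Lw_filter al s p : Lw al s p = Lw al (seq.filter (nz al) s) p.
Proof.
rewrite /Lw big_filter_cond [RHS]big_mkcond [LHS]big_mkcond; apply: eq_bigr => q _ /=.
by case: (al q =P 0) => [->|_]; case: (q < p)%O.
Qed.
Lemma Uw_filter al s p : Uw al s p = Uw al (seq.filter (nz al) s) p.
Proof.
rewrite /Uw big_filter_cond [RHS]big_mkcond [LHS]big_mkcond; apply: eq_bigr => q _ /=.
by case: (al q =P 0) => [->|_]; case: (q <= p)%O.
Qed.

Lemma bandsum_filter al s g0 g1 g2 a b z : uniq s ->
  bandsum al s g0 g1 g2 a b z = bandsum al (seq.filter (nz al) s) g0 g1 g2 a b z.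
Proof.
move=> us; rewrite /bandsum.
have -> : \sum_(p <- s) bterm al s g0 g1 g2 a b z p =
          \sum_(p <- s | nz al p) bterm al s g0 g1 g2 a b z p.
  rewrite [RHS]big_mkcond; apply: eq_big_seq => p ps /=.
  case: (al p =P 0) => //= h.
  by rewrite /bterm UwL // h addr0 !wb_LL !mul0r !addr0.
rewrite -big_filter; apply: eq_bigr => p _.
by rewrite /bterm -Lw_filter -Uw_filter.
Qed.

Definition supp s al := forall p, p \notin s -> al p = 0.

Lemma bandsum_indep al s1 s2 g0 g1 g2 a b z : uniq s1 -> uniq s2 ->
  supp s1 al -> supp s2 al ->
  bandsum al s1 g0 g1 g2 a b z = bandsum al s2 g0 g1 g2 a b z.
Proof.
move=> u1 u2 h1 h2; rewrite bandsum_filter // [RHS]bandsum_filter //.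
have pe : perm_eq (seq.filter (nz al) s1) (seq.filter (nz al) s2).
  apply: uniq_perm; rewrite ?filter_uniq // => q; rewrite !mem_filter /=.
  case: (al q =P 0) => //= hq.
  case: (boolP (q \in s1)) => [_|/h1 //]; case: (boolP (q \in s2)) => [_|/h2 //] //.
rewrite /bandsum (perm_big _ pe); apply: eq_bigr => p _.
by rewrite /bterm /Lw /Uw (perm_big _ pe) [X in wb _ X](perm_big _ pe).
Qed.

End Band.

Section BandProps.
Variables (R : realType) (d : Order.disp_t) (P : porderType d).
Variables (al : P -> R) (s : seq P).
Hypotheses (al0 : forall p, 0 <= al p) (us : uniq s) (sup : supp s al)
  (sum1 : \sum_(p <- s) al p = 1).

Lemma Lw_ge0 p : 0 <= Lw al s p.
Proof. by rewrite /Lw sumr_ge0. Qed.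
Lemma Uw_le1 p : Uw al s p <= 1.
Proof. by rewrite -sum1; apply: (@sum_sub R d P al s _ xpredT al0). Qed.

Lemma LU_bounds p : p \in s -> [/\ 0 <= Lw al s p, Lw al s p <= Uw al s p & Uw al s p <= 1].
Proof. move=> ps; split; [exact: Lw_ge0| rewrite UwL // lerDl; exact: al0 | exact: Uw_le1]. Qed.

Lemma UL_lt p1 p2 : (p1 < p2)%O -> Uw al s p1 <= Lw al s p2.
Proof. move=> lt12; apply: sum_sub => // q /= h; exact: le_lt_trans h lt12. Qed.


Variables (g0 g1 g2 : P -> P) (a b : R).
Hypotheses (a0 : 0 <= a) (ab : a <= b) (b1 : b <= 1).

Definition blo k := match k with 0%N => 0 | 1%N => a | _ => b end.
Definition bhi k := match k with 0%N => a | 1%N => b | _ => 1 end.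
Definition bg k := match k with 0%N => g0 | 1%N => g1 | _ => g2 end.
Definition active p k := 0 < wb (Lw al s p) (Uw al s p) (blo k) (bhi k).

Lemma bterm_ge0 z p : 0 <= bterm al s g0 g1 g2 a b z p.
Proof.
rewrite /bterm; apply: addr_ge0; first apply: addr_ge0; apply: mulr_ge0;
  rewrite ?ler0n // wb_ge0 //; lra.
Qed.

Lemma bandsum_ge0 z : 0 <= bandsum al s g0 g1 g2 a b z.
Proof. by apply: sumr_ge0 => p _; exact: bterm_ge0. Qed.

Definition Dl := undup (map g0 s ++ map g1 s ++ map g2 s).

Lemma bandsum_out z : z \notin Dl -> bandsum al s g0 g1 g2 a b z = 0.
Proof.
rewrite mem_undup !mem_cat !negb_or => /and3P[n0 n1 n2].
apply: big1_seq => p /andP[_ ps]; rewrite /bterm.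
have h (g : P -> P) : z \notin map g s -> (g p == z)%:R = 0 :> R.
  by move=> nz; case: eqP => // e; move: nz; rewrite -e map_f.
by rewrite (h _ n0) ?(h _ n1) ?(h _ n2) // !mulr0 !addr0.
Qed.

Lemma bandsum_total (t : seq P) : uniq t -> {subset Dl <= t} ->
  \sum_(z <- t) bandsum al s g0 g1 g2 a b z = 1.
Proof.
move=> ut sub; rewrite /bandsum exchange_big /= -sum1; apply: eq_big_seq => p ps.
rewrite /bterm !big_split /= !sum_ind //.
have t0 : g0 p \in t by apply: sub; rewrite /Dl mem_undup !mem_cat map_f.
have t1 : g1 p \in t by apply: sub; rewrite /Dl mem_undup !mem_cat map_f ?orbT.
have t2 : g2 p \in t by apply: sub; rewrite /Dl mem_undup !mem_cat map_f ?orbT.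
rewrite t0 t1 t2.
have [h1 h2 h3] := LU_bounds ps.
by rewrite wb_sum // UwL // addrC addKr.
Qed.

Lemma bterm_pos z p : 0 < bterm al s g0 g1 g2 a b z p ->
  exists2 k, (k < 3)%N & active p k /\ bg k p = z.
Proof.
rewrite /bterm /active => h.
have hk (k : nat) : (k < 3)%N -> ~ (0 < wb (Lw al s p) (Uw al s p) (blo k) (bhi k) /\ bg k p = z) ->
   wb (Lw al s p) (Uw al s p) (blo k) (bhi k) * (bg k p == z)%:R = 0.
  move=> k3 nk; have : 0 <= wb (Lw al s p) (Uw al s p) (blo k) (bhi k).
    by apply: wb_ge0; case: k k3 {nk} => [|[|[|]]] //=; lra.
  case: (bg k p =P z) => [e|]; last by rewrite mulr0.
  rewrite le_eqVlt => /orP[/eqP <-|pos]; first by rewrite mul0r.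
  by exfalso; apply: nk.
case: (pselect (0 < wb (Lw al s p) (Uw al s p) 0 a /\ g0 p = z)) => [[]|n0]; first by exists 0%N.
case: (pselect (0 < wb (Lw al s p) (Uw al s p) a b /\ g1 p = z)) => [[]|n1]; first by exists 1%N.
case: (pselect (0 < wb (Lw al s p) (Uw al s p) b 1 /\ g2 p = z)) => [[]|n2]; first by exists 2%N.
move: h; rewrite (hk 0%N) // (hk 1%N) // (hk 2%N) //; lra.
Qed.

Lemma bandsum_pos z : 0 < bandsum al s g0 g1 g2 a b z ->
  exists p, p \in s /\ (exists2 k, (k < 3)%N & active p k /\ bg k p = z).
Proof.
move=> h; case: (pselect (exists2 p, p \in s & 0 < bterm al s g0 g1 g2 a b z p)).
  by case=> p ps /bterm_pos hp; exists p.
move=> np; move: h; rewrite /bandsum big_seq big1 ?ltxx // => p ps.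
apply/eqP; rewrite eq_le bterm_ge0 andbT leNgt; apply/negP => hp; apply: np; by exists p.
Qed.

Hypothesis HG : forall p q, p \in s -> q \in s -> (p <= q)%O ->
  [/\ (g0 p <= g0 q)%O, (g1 p <= g1 q)%O, (g2 p <= g2 q)%O, (g0 p <= g1 q)%O &
      (g0 p <= g2 q)%O] /\ (a < b -> b < 1 -> (g1 p <= g2 q)%O).

Lemma band_key p1 p2 k1 k2 : p1 \in s -> p2 \in s -> (p1 <= p2)%O -> (k1 < 3)%N -> (k2 < 3)%N ->
  active p1 k1 -> active p2 k2 -> (p1 = p2 -> (k1 <= k2)%N) -> (bg k1 p1 <= bg k2 p2)%O.
Proof.
move=> p1s p2s le12 k13 k23 ac1 ac2 heq.
have [L1 LU1 U1] := LU_bounds p1s; have [L2 LU2 U2] := LU_bounds p2s.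
have [lo1 [hi1 lh1]] := wb_pos LU1 ac1; have [lo2 [hi2 lh2]] := wb_pos LU2 ac2.
have k12 : (k1 <= k2)%N.
  case: (p1 =P p2) => [/heq //|ne].
  have lt12 : (p1 < p2)%O by rewrite lt_neqAle le12 andbT; apply/eqP.
  have hUL := UL_lt lt12; rewrite leqNgt; apply/negP => k21.
  have hh := lt_trans (lt_le_trans lo1 hUL) hi2.
  move: k13 k23 k21 hh; clear heq ac1 ac2 lo1 hi1 lh1 lo2 hi2 lh2.
  case: k1 => [|[|[|]]] //; case: k2 => [|[|[|]]] //= _ _ _; rewrite ?ltxx //.
  by move=> h; have := lt_le_trans h ab; rewrite ltxx.
have [[h00 h11 h22 h01 h02] h12] := HG p1s p2s le12.
move: k13 k23 k12 lo1 hi1 lh1 lo2 hi2 lh2; clear heq ac1 ac2.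
case: k1 => [|[|[|]]] //; case: k2 => [|[|[|]]] //= *.
by apply: h12.
Qed.

Hypothesis cs : is_chain s.

Lemma bandsum_chain z1 z2 : 0 < bandsum al s g0 g1 g2 a b z1 ->
  0 < bandsum al s g0 g1 g2 a b z2 -> (z1 <= z2)%O \/ (z2 <= z1)%O.
Proof.
have K p1 p2 k1 k2 : p1 \in s -> p2 \in s -> (p1 <= p2)%O -> (k1 < 3)%N -> (k2 < 3)%N ->
    active p1 k1 -> active p2 k2 ->
    (bg k1 p1 <= bg k2 p2)%O \/ (bg k2 p2 <= bg k1 p1)%O.
  move=> p1s p2s le12 k13 k23 ac1 ac2; case: (leqP k1 k2) => h.
    by left; apply: band_key.
  case: (p1 =P p2) => [e|ne].
    by subst p2; right; apply: band_key => // _; exact: ltnW.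
  by left; apply: band_key => // /ne.
move=> /bandsum_pos [p1 [p1s [k1 k13 [ac1 <-]]]] /bandsum_pos [p2 [p2s [k2 k23 [ac2 <-]]]].
case: (cs p1s p2s) => le.
  exact: K.
by case: (K p2 p1 k2 k1) => //; [right|left].
Qed.

End BandProps.

Section Lip.
Variables (R : realType) (d : Order.disp_t) (P : porderType d).

Lemma sum_const_seq (c : seq P) (E : R) : \sum_(p <- c) E = E *+ size c.
Proof. elim: c => [|x c IH]; by rewrite ?big_nil ?big_cons ?IH ?mulrS. Qed.

Lemma sum_le_const (c : seq P) (F : P -> R) (E : R) : (forall p, p \in c -> F p <= E) ->
  \sum_(p <- c) F p <= E *+ size c.
Proof. move=> h; rewrite -sum_const_seq big_seq [X in _ <= X]big_seq; exact: ler_sum. Qed.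

Definition dist1 (c : seq P) (al be : P -> R) := \sum_(q <- c) `|al q - be q|.

Lemma Lw_lip (c : seq P) al be p : `|Lw al c p - Lw be c p| <= dist1 c al be.
Proof.
rewrite /Lw -sumrB; apply: le_trans (ler_norm_sum _ _ _) _.
rewrite /dist1 big_mkcond [X in _ <= X]big_mkcond; apply: ler_sum => q _.
by case: (q < p)%O.
Qed.
Lemma Uw_lip (c : seq P) al be p : `|Uw al c p - Uw be c p| <= dist1 c al be.
Proof.
rewrite /Uw -sumrB; apply: le_trans (ler_norm_sum _ _ _) _.
rewrite /dist1 big_mkcond [X in _ <= X]big_mkcond; apply: ler_sum => q _.
by case: (q <= p)%O.
Qed.

Lemma ind_lip (w w' : R) (bb : bool) : `|w * bb%:R - w' * bb%:R| <= `|w - w'|.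
Proof. by case: bb; rewrite ?mulr1 ?mulr0 ?subrr ?normr0. Qed.

Lemma bandsum_lip (c : seq P) al be g0 g1 g2 (a b a' b' : R) z :
  `|bandsum al c g0 g1 g2 a b z - bandsum be c g0 g1 g2 a' b' z| <=
    (dist1 c al be *+ 12 + `|a - a'| *+ 3 + `|b - b'| *+ 3) *+ size c.
Proof.
rewrite /bandsum -sumrB; apply: le_trans (ler_norm_sum _ _ _) _.
apply: sum_le_const => p _; rewrite /bterm.
set L := Lw al c p; set U := Uw al c p; set L' := Lw be c p; set U' := Uw be c p.
have hL : `|L - L'| <= dist1 c al be by exact: Lw_lip.
have hU : `|U - U'| <= dist1 c al be by exact: Uw_lip.
have hw lo hi lo' hi' : `|wb L U lo hi - wb L' U' lo' hi'| <=
    dist1 c al be *+ 4 + `|lo - lo'| + `|hi - hi'|.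
  apply: le_trans (wb_lip _ _ _ _ _ _ _ _) _.
  rewrite !mulrS !mulr0n; lra.
have e1 := ind_lip (wb L U 0 a) (wb L' U' 0 a') (g0 p == z).
have e2 := ind_lip (wb L U a b) (wb L' U' a' b') (g1 p == z).
have e3 := ind_lip (wb L U b 1) (wb L' U' b' 1) (g2 p == z).
have f1 := hw 0 a 0 a'; have f2 := hw a b a' b'; have f3 := hw b 1 b' 1.
rewrite subrr normr0 addr0 in f1; rewrite subrr normr0 addr0 in f3.
set T := _ - _.
have -> : T = (wb L U 0 a * (g0 p == z)%:R - wb L' U' 0 a' * (g0 p == z)%:R)
  + (wb L U a b * (g1 p == z)%:R - wb L' U' a' b' * (g1 p == z)%:R)
  + (wb L U b 1 * (g2 p == z)%:R - wb L' U' b' 1 * (g2 p == z)%:R) by rewrite /T; ring.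
apply: le_trans (ler_normD _ _) _; apply: le_trans (lerD (ler_normD _ _) (lexx _)) _.
rewrite !mulrS !mulr0n in f1 f2 f3 *.
have := normr_ge0 (a - a'); have := normr_ge0 (b - b'); clear T hw hL hU; clearbody L U L' U'; lra.
Qed.

End Lip.

Section Fin.
Variable R : realType.

Lemma fin_eps (T : eqType) (l : seq T) (Q : T -> R -> Prop) :
  (forall x e e', Q x e -> 0 < e' -> e' <= e -> Q x e') ->
  (forall x, x \in l -> exists2 e, 0 < e & Q x e) ->
  exists2 e, 0 < e & forall x, x \in l -> Q x e.
Proof.
move=> mono; elim: l => [|y l IH] h; first by exists 1.
have [e1 e1p Q1] := h y (mem_head _ _).
have [e2 e2p Q2] : exists2 e, 0 < e & forall x, x \in l -> Q x e by apply: IH => x xl; apply: h; rewrite in_cons xl orbT.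
exists (Num.min e1 e2); first by rewrite lt_min e1p e2p.
move=> x; rewrite in_cons => /orP[/eqP ->|xl].
  by apply: mono Q1 _ _; rewrite ?lt_min ?e1p ?e2p // ge_min lexx.
by apply: mono (Q2 x xl) _ _; rewrite ?lt_min ?e1p ?e2p // ge_min lexx orbT.
Qed.
Lemma cpt_unif (a b : R) (W : R -> R -> Prop) :
  (forall s e e', W s e -> 0 < e' -> e' <= e -> W s e') ->
  (forall s, a <= s <= b -> exists2 e, 0 < e & forall s', `|s' - s| < e -> W s' e) ->
  exists2 e, 0 < e & forall s, a <= s <= b -> W s e.
Proof.
move=> mono loc.
have := @segment_compact R a b; rewrite compact_near_coveringP => /(_ R (0%R^'+) (fun e s => W s e) _).
have H : forall x, `[a, b]%classic x -> \forall x' \near x & i \near 0%R^'+, W x' i.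
  move=> x; rewrite /= in_itv /= => /loc [e ep He].
  exists (ball x e, [set i | 0 < i < e]) => /=.
    split; first exact: nbhsx_ballx.
    apply: filterS (filterI (nbhs_right_gt 0) (nbhs_right_lt ep)) => i [h1 h2] /=.
    by rewrite h1 h2.
  move=> [x' i] [/= bx /andP[i0 ie]]; apply: (mono _ e) => //; last exact: ltW.
  apply: He; move: bx; rewrite /ball /= distrC //.
move=> /(_ H) near.
have [i [ip Wi]] := filter_ex (filterI (nbhs_right_gt 0) near).
exists i => // s hs; apply: Wi; rewrite /= in_itv /=; exact: hs.
Qed.
End Fin.

Fixpoint sublists (T : Type) (s : seq T) : seq (seq T) :=
  match s with
  | [::] => [:: [::]]
  | x :: s' => let r := sublists s' in r ++ map (cons x) r
  end.

Lemma filter_sublists (T : eqType) (s : seq T) (q : pred T) : seq.filter q s \in sublists s.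
Proof.
elim: s => [|x s IH] //=; case: (q x); rewrite mem_cat ?IH //.
by rewrite map_f ?orbT.
Qed.

Section Real.
Variables (R : realType) (d : Order.disp_t) (P : porderType d).

Definition supp_list (S : set P) (al : realization R S) : seq P :=
  projT1 (cid (proj2 (svalP al))).

Lemma supp_listP (S : set P) (al : realization R S) :
  [/\ uniq (supp_list al), (forall p, p \in supp_list al -> S p), is_chain (supp_list al),
      supported_on (supp_list al) (sval al) & \sum_(p <- supp_list al) sval al p = 1].
Proof. exact: (projT2 (cid (proj2 (svalP al)))). Qed.

Lemma real_ge0 (S : set P) (al : realization R S) p : 0 <= sval al p.
Proof. exact: (proj1 (svalP al)). Qed.

Lemma LO (S : set P) (U : set (realization R S)) (aa : realization R S) (D : seq P) :
  open U -> U aa -> uniq D -> supported_on D (sval aa) ->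
  exists2 e, 0 < e & forall bb : realization R S, supported_on D (sval bb) ->
    (forall p, p \in D -> `|sval bb p - sval aa p| < e) -> U bb.
Proof.
move=> oU Ua uD sa.
have [e1 e1p H1] : exists2 e, 0 < e & forall p, p \in D -> sval aa p != 0 -> e <= sval aa p.
  apply: (@fin_eps R _ D (fun p e => sval aa p != 0 -> e <= sval aa p)).
    by move=> x e e' h _ le' nz; exact: le_trans le' (h nz).
  move=> x _; case: (boolP (sval aa x == 0)) => [_|nz]; first by exists 1.
  by exists (sval aa x) => //; rewrite lt_def nz real_ge0.
pose valid (sg : seq P) := [/\ uniq sg, (forall p, p \in sg -> S p), is_chain sg &
   supported_on sg (sval aa)].
have [e2 e2p H2] : exists2 e, 0 < e & forall sg, sg \in sublists D -> valid sg ->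
   forall bb : realization R S, supported_on sg (sval bb) ->
    (forall p, p \in sg -> `|sval bb p - sval aa p| < e) -> U bb.
  apply: (@fin_eps R _ (sublists D) (fun sg e => valid sg ->
   forall bb : realization R S, supported_on sg (sval bb) ->
    (forall p, p \in sg -> `|sval bb p - sval aa p| < e) -> U bb)).
    move=> sg e e' h e'p le' v bb sb cl; apply: (h v bb sb) => p ps.
    exact: lt_le_trans (cl p ps) le'.
  move=> sg _; case: (pselect (valid sg)) => [[u1 u2 u3 u4]|nv]; last by exists 1.
  have [e ep He] := oU sg u1 u2 u3 aa Ua u4; exists e => // _; exact: He.
exists (Num.min e1 e2); first by rewrite lt_min e1p e2p.
move=> bb sb cl.
pose sg := seq.filter (fun p => sval bb p != 0) D.
have [ub Sb cb sbb _] := supp_listP bb.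
have inb p : p \in sg -> p \in supp_list bb.
  rewrite mem_filter => /andP[nz _]; apply/negP => nin; by move: nz; rewrite (sbb p (introN idP nin)) eqxx.
apply: (H2 sg (filter_sublists _ _)).
- split.
  + exact: filter_uniq.
  + by move=> p /inb; exact: Sb.
  + by move=> p q /inb pb /inb qb; exact: cb.
  + move=> p; rewrite mem_filter negb_and negbK => /orP[/eqP bz|pD]; last exact: sa.
    case: (boolP (p \in D)) => pD; last exact: sa.
    case: (eqVneq (sval aa p) 0) => // nz; exfalso.
    have := cl p pD; rewrite bz sub0r normrN ger0_norm ?real_ge0 // lt_min => /andP[h _].
    by have := H1 p pD nz; rewrite leNgt h.
- move=> p; rewrite mem_filter negb_and negbK => /orP[/eqP //|]; exact: sb.
- move=> p; rewrite mem_filter => /andP[_ pD].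
  by have := cl p pD; rewrite lt_min => /andP[].
Qed.

End Real.

Section Band2.
Variables (R : realType) (d : Order.disp_t) (P : porderType d).
Variables (S S' : set P) (g0 g1 g2 : P -> P) (A B : R -> R).
Hypotheses (hAB : forall t, [/\ 0 <= A t, A t <= B t & B t <= 1])
  (hLA : forall t t', `|A t - A t'| <= `|t - t'| *+ 2)
  (hLB : forall t t', `|B t - B t'| <= `|t - t'| *+ 2)
  (hS : forall p, S p -> [/\ S' (g0 p), S' (g1 p) & S' (g2 p)])
  (hG : forall t p q, S p -> S q -> (p <= q)%O ->
    [/\ (g0 p <= g0 q)%O, (g1 p <= g1 q)%O, (g2 p <= g2 q)%O, (g0 p <= g1 q)%O &
      (g0 p <= g2 q)%O] /\ (A t < B t -> B t < 1 -> (g1 p <= g2 q)%O)).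

Definition Phi0 (al : realization R S) (t : R) : P -> R :=
  bandsum (sval al) (supp_list al) g0 g1 g2 (A t) (B t).

Lemma Phi_in al t : in_realization S' (Phi0 al t).
Proof.
have [us Ss cs ss s1] := supp_listP al.
have al0 := real_ge0 al.
have [a0 ab b1] := hAB t.
split; first by move=> z; apply: bandsum_ge0.
exists (seq.filter (fun z => Phi0 al t z != 0) (Dl (supp_list al) g0 g1 g2)); split.
- by rewrite filter_uniq // undup_uniq.
- move=> z; rewrite mem_filter => /andP[_].
  rewrite /Dl mem_undup !mem_cat => /or3P[]/mapP[p ps ->]; by have [] := hS (Ss p ps).
- move=> z1 z2; rewrite !mem_filter => /andP[n1 _] /andP[n2 _].
  have HG p q : p \in supp_list al -> q \in supp_list al -> (p <= q)%O -> _ :=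
    fun ps qs pq => @hG t p q (Ss p ps) (Ss q qs) pq.
  apply: (bandsum_chain al0 us s1 a0 ab b1 HG cs).
  + by rewrite lt_def n1 bandsum_ge0.
  + by rewrite lt_def n2 bandsum_ge0.
- move=> z; rewrite mem_filter negb_and negbK => /orP[/eqP //|nD].
  exact: bandsum_out.
- rewrite big_filter big_mkcond /=.
  rewrite -(@bandsum_total R d P _ _ al0 us s1 g0 g1 g2 (A t) (B t) _ (undup_uniq _) (fun z h => h)).
  by apply: eq_bigr => z _; case: eqP.
Qed.

Definition Phi (w : realization R S * R) : realization R S' :=
  exist _ (Phi0 w.1 w.2) (Phi_in w.1 w.2).

Lemma Phi_eval (al : realization R S) t c z : uniq c -> supported_on c (sval al) ->
  sval (Phi (al, t)) z = bandsum (sval al) c g0 g1 g2 (A t) (B t) z.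
Proof.
move=> uc sc; have [us _ _ ss _] := supp_listP al.
exact: bandsum_indep.
Qed.

Lemma Jlem (al0 : realization R S) c t0 (U : set (realization R S')) :
  uniq c -> supported_on c (sval al0) -> open U -> U (Phi (al0, t0)) ->
  exists2 eta, 0 < eta & forall (be : realization R S) t, supported_on c (sval be) ->
    (forall p, p \in c -> `|sval be p - sval al0 p| < eta) -> `|t - t0| < eta ->
    U (Phi (be, t)).
Proof.
move=> uc sc oU Ua.
have uD : uniq (Dl c g0 g1 g2) by exact: undup_uniq.
have supD be t : supported_on c (sval be) -> supported_on (Dl c g0 g1 g2) (sval (Phi (be, t))).
  by move=> sb z zn; rewrite (Phi_eval _ _ uc sb); exact: bandsum_out.
have [e ep He] := LO oU Ua uD (supD al0 t0 sc).
set N : R := (size c)%:R.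
have N0 : 0 <= N by rewrite ler0n.
set K : R := (N + 1) ^+ 2 * 12.
have K0 : 0 <= K by rewrite /K mulr_ge0 // ?exprn_ge0 // addr_ge0.
exists (e / (K + 1)); first by rewrite divr_gt0 // ltr_wpDl.
set eta := e / (K + 1).
have eK : e = eta * (K + 1) by rewrite /eta divfK // gt_eqF // ltr_wpDl.
have etap : 0 < eta by rewrite /eta divr_gt0 // ltr_wpDl.
move=> be t sb cl ct; apply: He; first exact: supD.
move=> z _; rewrite (Phi_eval _ _ uc sb) (Phi_eval _ _ uc sc).
apply: le_lt_trans (bandsum_lip _ _ _ _ _ _ _ _ _ _ _) _.
have hd : dist1 c (sval be) (sval al0) <= eta * N.
  by rewrite /dist1 /N mulr_natr; apply: sum_le_const => p pc; exact: ltW (cl p pc).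
have hA : `|A t - A t0| <= eta * 2.
  by apply: le_trans (hLA _ _) _; rewrite mulr_natr !mulr2n; apply: lerD; exact: ltW.
have hB : `|B t - B t0| <= eta * 2.
  by apply: le_trans (hLB _ _) _; rewrite mulr_natr !mulr2n; apply: lerD; exact: ltW.
set Y := _ + _ + _.
rewrite -mulr_natr -/N.
have hY : Y <= eta * (N * 12 + 12).
  apply: (@le_trans _ _ ((eta * N) *+ 12 + (eta * 2) *+ 3 + (eta * 2) *+ 3)).
    by rewrite /Y; apply: lerD; [apply: lerD|]; rewrite lerMn2r ?hd ?hA ?hB ?orbT.
  by rewrite le_eqVlt; apply/orP; left; apply/eqP; ring.
rewrite eK; apply: le_lt_trans (ler_wpM2r N0 hY) _.
rewrite -mulrA ltr_pM2l // /K.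
have -> : (N + 1) ^+ 2 * 12 + 1 = (N * 12 + 12) * N + (N * 12 + 13) by ring.
rewrite ltrDl; apply: ltr_wpDl; [by rewrite mulr_ge0|by []].
Qed.

Lemma Phi_cont : continuous Phi.
Proof.
move=> [al t] N /=; rewrite nbhsE => -[U [oU Ua] UN].
have [uc Sc cc sc _] := supp_listP al.
have [eta etap HJ] := Jlem uc sc oU Ua.
pose del := eta / 2.
have delp : 0 < del by rewrite divr_gt0.
have deleta : del < eta by rewrite /del ltr_pdivrMr // ltr_pMr // ltr1n.
pose Aset := [set be : realization R S | forall s, `|s - t| <= del -> U (Phi (be, s))].
have Aal : Aset al.
  move=> s hs; apply: HJ => //; last exact: le_lt_trans hs deleta.
  by move=> p _; rewrite subrr normr0.
have oA : open Aset.
  move=> c' uc' Sc' cc' b1 Ab1 sb1.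
  pose W := fun s e => forall be : realization R S,
    supported_on c' (sval be) -> (forall p, p \in c' -> `|sval be p - sval b1 p| < e) ->
    U (Phi (be, s)).
  have [e ep He] : exists2 e, 0 < e & forall s, t - del <= s <= t + del -> W s e.
  apply: cpt_unif.
  - move=> s e e' h e'p le' be sb cl; apply: h => // p pc; exact: lt_le_trans (cl p pc) le'.
  - move=> s hs; have hs' : `|s - t| <= del by rewrite ler_distl.
    have [et etp Het] := Jlem uc' sb1 oU (Ab1 s hs').
    by exists et => // s' hs'' be sb cl; exact: Het.
  exists e => // be sb cl s hs; apply: He => //; by rewrite -ler_distl.
exists (Aset, ball t del) => /=.
  split; last exact: nbhsx_ballx.
  exact: open_nbhs_nbhs.
move=> [be s] [/= Ab bs]; apply: UN; apply: Ab.
by move: bs; rewrite /ball /= distrC => /ltW.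
Qed.

End Band2.


Section Eval.
Variables (R : realType) (d : Order.disp_t) (P : porderType d).

Lemma real_eq (S : set P) (a b : realization R S) : (forall z, sval a z = sval b z) -> a = b.
Proof.
move: a b => [fa pa] [fb pb] /= h.
have e : fa = fb := funext h.
subst fb; congr exist; exact: Prop_irrelevance.
Qed.

Lemma sum_ind2 (s : seq P) (al : P -> R) z : uniq s -> supported_on s al ->
  \sum_(p <- s) al p * (p == z)%:R = al z.
Proof.
move=> us ss.
have H : \sum_(p <- s) al p * (p == z)%:R = if z \in s then al z else 0.
  elim: s us {ss} => [|y s IH] /=; first by rewrite big_nil.
  move=> /andP[ys us]; rewrite big_cons IH // in_cons.
  case: (y =P z) => [<-|ne] /=; last by rewrite mulr0 add0r; case: (z =P y) => // e; case: ne.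
  by rewrite eqxx (negbTE ys) mulr1 addr0.
rewrite H; case: ifP => // /negbT zn; by rewrite ss.
Qed.

Variables (al : P -> R) (s : seq P) (g0 g1 g2 : P -> P).
Hypotheses (al0 : forall p, 0 <= al p) (us : uniq s) (s1 : \sum_(p <- s) al p = 1).

Lemma band11 z : bandsum al s g0 g1 g2 1 1 z = \sum_(p <- s) al p * (g0 p == z)%:R.
Proof.
apply: eq_big_seq => p ps; have [h1 h2 h3] := LU_bounds al0 us s1 ps.
have e : wb (Lw al s p) (Uw al s p) 0 1 = al p by rewrite wb_full // UwL // addrAC subrr add0r.
by rewrite /bterm !wb_empty e !mul0r !addr0.
Qed.
Lemma band01 z : bandsum al s g0 g1 g2 0 1 z = \sum_(p <- s) al p * (g1 p == z)%:R.
Proof.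
apply: eq_big_seq => p ps; have [h1 h2 h3] := LU_bounds al0 us s1 ps.
have e : wb (Lw al s p) (Uw al s p) 0 1 = al p by rewrite wb_full // UwL // addrAC subrr add0r.
by rewrite /bterm !wb_empty e !mul0r add0r addr0.
Qed.
Lemma band00 z : bandsum al s g0 g1 g2 0 0 z = \sum_(p <- s) al p * (g2 p == z)%:R.
Proof.
apply: eq_big_seq => p ps; have [h1 h2 h3] := LU_bounds al0 us s1 ps.
have e : wb (Lw al s p) (Uw al s p) 0 1 = al p by rewrite wb_full // UwL // addrAC subrr add0r.
by rewrite /bterm !wb_empty e !mul0r !add0r.
Qed.
End Eval.

Lemma cont_slice (R : realType) (X Y : topologicalType) (F : X * R -> Y) (t0 : R) :
  continuous F -> continuous (fun a => F (a, t0)).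
Proof.
move=> cF a.
have h : (fun a => (a, t0)) @ a --> (a, t0).
  move=> N [[A B] /= [nA nB] sAB]; apply: filterS nA => a' Aa'.
  by apply: (sAB (a', t0)); split => //; exact: nbhs_singleton nB.
exact: (@continuous_comp _ _ _ (fun a => (a, t0)) F a h (cF _)).
Qed.

Section Arith.
Variable R : realType.
Lemma clamp_lip1 (t t' : R) :
  `|clampLU 0 1 (1 - t) - clampLU 0 1 (1 - t')| <= `|t - t'|.
Proof.
apply: le_trans (clamp_lip _ _ _ _ _ _) _; rewrite !subrr normr0 !add0r.
by rewrite opprB addrC addrA subrK distrC.
Qed.
Lemma clamp_01 (t : R) : 0 <= clampLU 0 1 t <= 1.
Proof. by rewrite /clampLU; mm; apply/andP; split; lra. Qed.
Lemma lip2 (t t' : R) : `|t - t'| <= `|t - t'| *+ 2.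
Proof. by rewrite mulr2n lerDl normr_ge0. Qed.
Lemma lip_cst (c t t' : R) : `|c - c| <= `|t - t'| *+ 2.
Proof. by rewrite subrr normr0 mulrn_wge0. Qed.

Definition A2f (u : R) := Num.min (2 * u) (2 - 2 * u).
Definition B2f (u : R) := Num.min 1 (2 - 2 * u).
Lemma AB2 (u : R) : 0 <= u <= 1 -> [/\ 0 <= A2f u, A2f u <= B2f u & B2f u <= 1].
Proof. move=> /andP[u0 u1]; rewrite /A2f /B2f; split; mm; lra. Qed.
Lemma AB2_ex (u : R) : 0 <= u <= 1 -> A2f u < B2f u -> B2f u < 1 -> False.
Proof. move=> /andP[u0 u1]; rewrite /A2f /B2f; mm; lra. Qed.
Lemma A2_lip (u u' : R) : 0 <= u <= 1 -> 0 <= u' <= 1 ->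
  `|A2f u - A2f u'| <= `|u - u'| *+ 2.
Proof.
move=> /andP[u0 u1] /andP[v0 v1]; rewrite /A2f mulr2n.
mm; repeat match goal with |- context[`|?z|] => case: (ler0P z) => ? end; lra.
Qed.
Lemma B2_lip (u u' : R) : 0 <= u <= 1 -> 0 <= u' <= 1 ->
  `|B2f u - B2f u'| <= `|u - u'| *+ 2.
Proof.
move=> /andP[u0 u1] /andP[v0 v1]; rewrite /B2f mulr2n.
mm; repeat match goal with |- context[`|?z|] => case: (ler0P z) => ? end; lra.
Qed.
Lemma clamp_at0 : clampLU 0 1 (1 - 0 : R) = 1.
Proof. by rewrite subr0 /clampLU; mm; lra. Qed.
Lemma clamp_at1 : clampLU 0 1 (1 - 1 : R) = 0.
Proof. by rewrite subrr /clampLU; mm; lra. Qed.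
Lemma A2_1 : A2f (1 : R) = 0. Proof. rewrite /A2f; mm; lra. Qed.
Lemma B2_1 : B2f (1 : R) = 0. Proof. rewrite /B2f; mm; lra. Qed.
Lemma A2_0 : A2f (0 : R) = 0. Proof. rewrite /A2f; mm; lra. Qed.
Lemma B2_0 : B2f (0 : R) = 1. Proof. rewrite /B2f; mm; lra. Qed.
End Arith.

Section Main.
Variables (R : realType) (d : Order.disp_t) (P : porderType d) (f : P -> P) (x y : P).
Hypotheses (hf : downward_closure f) (hxy : (x < y)%O) (hpre : f @^-1` [set x] = [set x]).

Lemma fmono : {homo f : a b / (a <= b)%O}. Proof. by case: hf. Qed.
Lemma fle z : (f z <= z)%O. Proof. by case: hf. Qed.
Lemma fidem z : f (f z) = f z. Proof. by case: hf. Qed.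
Lemma fx : f x = x.
Proof. have : (f @^-1` [set x]) x by rewrite hpre. by []. Qed.
Lemma fpre z : f z = x -> z = x.
Proof. move=> h; have : (f @^-1` [set x]) z by []. by rewrite hpre. Qed.

Lemma xlt_f z : (x < z)%O -> (x < f z)%O.
Proof.
move=> xz; rewrite lt_neqAle; apply/andP; split.
  apply/eqP => e; have := fpre (esym e) => zx; by move: xz; rewrite zx ltxx.
by rewrite -{1}fx; apply: fmono; exact: ltW.
Qed.

Definition SS := open_interval (@setT P) x y.
Definition SF := open_interval (Fix f) x y.

Lemma fS z : SS z -> SF (f z).
Proof.
move=> [_ [xz zy]]; split; first exact: fidem.
split; [exact: xlt_f | exact: le_lt_trans (fle z) zy].
Qed.
Lemma fSS z : SS z -> SS (f z).
Proof. by move=> /fS [_ h]. Qed.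
Lemma SFS z : SF z -> SS z.
Proof. by move=> [_ h]. Qed.

Definition A1 (t : R) := clampLU 0 1 (1 - t).

Lemma hAB1 : forall t : R, [/\ 0 <= A1 t, A1 t <= (fun _ => 1) t & (fun _ => 1 : R) t <= 1].
Proof. by move=> t; have /andP[h1 h2] := clamp_01 (1 - t); split. Qed.
Lemma A1_0 : A1 0 = 1. Proof. exact: clamp_at0. Qed.
Lemma A1_1 : A1 1 = 0. Proof. exact: clamp_at1. Qed.
Lemma hL1 : forall t t' : R, `|A1 t - A1 t'| <= `|t - t'| *+ 2.
Proof. move=> t t'; exact: le_trans (clamp_lip1 _ _) (lip2 _ _). Qed.
Lemma hLc (c : R) : forall t t' : R, `|(fun _ => c) t - (fun _ => c) t'| <= `|t - t'| *+ 2.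
Proof. move=> t t'; exact: lip_cst. Qed.
Lemma hAB11 : forall t : R, [/\ 0 <= (fun _ => 1 : R) t, (fun _ => 1 : R) t <= (fun _ => 1) t
   & (fun _ => 1 : R) t <= 1].
Proof. by move=> t; split; rewrite ?ler01. Qed.
Lemma hAB01 : forall t : R, [/\ 0 <= (fun _ => 0 : R) t, (fun _ => 0 : R) t <= (fun _ => 1) t
   & (fun _ => 1 : R) t <= 1].
Proof. by move=> t; split; rewrite ?ler01. Qed.

Lemma hS_H : forall p, SS p -> [/\ SS (f p), SS (id p) & SS (id p)].
Proof. by move=> p h; split => //; exact: fSS. Qed.
Lemma hG_H : forall (t : R) p q, SS p -> SS q -> (p <= q)%O ->
  [/\ (f p <= f q)%O, (id p <= id q)%O, (id p <= id q)%O, (f p <= id q)%O & (f p <= id q)%O]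
  /\ (A1 t < 1 -> (1 : R) < 1 -> (id p <= id q)%O).
Proof.
move=> t p q _ _ pq; have fq := le_trans (fle p) pq.
by split => //; split => //; exact: fmono.
Qed.
Lemma hS_g : forall p, SS p -> [/\ SF (f p), SF (f p) & SF (f p)].
Proof. by move=> p /fS h; split. Qed.
Lemma hG_g : forall (t : R) p q, SS p -> SS q -> (p <= q)%O ->
  [/\ (f p <= f q)%O, (f p <= f q)%O, (f p <= f q)%O, (f p <= f q)%O & (f p <= f q)%O]
  /\ ((fun _ => 1 : R) t < 1 -> (1 : R) < 1 -> (f p <= f q)%O).
Proof. by move=> t p q _ _ pq; have h := fmono pq; split. Qed.
Lemma hS_h : forall p, SF p -> [/\ SS (id p), SS (id p) & SS (id p)].
Proof. by move=> p /SFS h; split. Qed.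
Lemma hG_h : forall (t : R) p q, SF p -> SF q -> (p <= q)%O ->
  [/\ (id p <= id q)%O, (id p <= id q)%O, (id p <= id q)%O, (id p <= id q)%O & (id p <= id q)%O]
  /\ ((fun _ => 0 : R) t < 1 -> (1 : R) < 1 -> (id p <= id q)%O).
Proof. by move=> t p q _ _ pq; split. Qed.

Definition H1 := @Phi R d P SS SS f id id A1 (fun _ => 1) hAB1 hS_H hG_H.
Definition Pg := @Phi R d P SS SF f f f (fun _ => 1) (fun _ => 1) hAB11 hS_g hG_g.
Definition Ph := @Phi R d P SF SS id id id (fun _ => 0) (fun _ => 1) hAB01 hS_h hG_h.
Definition gmap (al : realization R SS) : realization R SF := Pg (al, 0).
Definition hmap (be : realization R SF) : realization R SS := Ph (be, 0).

Lemma H1_val al t z : sval (H1 (al, t)) z = bandsum (sval al) (supp_list al) f id id (A1 t) 1 z.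
Proof. by []. Qed.
Arguments gmap : simpl never.
Arguments hmap : simpl never.

Lemma hmap_val be z : sval (hmap be) z = sval be z.
Proof.
have [us _ _ ss s1] := supp_listP be.
rewrite /hmap /= /Phi0 /= band01 //; last exact: real_ge0.
exact: sum_ind2.
Qed.

Lemma gmap_val al z : sval (gmap al) z = \sum_(p <- supp_list al) sval al p * (f p == z)%:R.
Proof.
have [us _ _ ss s1] := supp_listP al.
by rewrite /gmap /= /Phi0 /= band11 //; exact: real_ge0.
Qed.

Lemma case1 : homotopy_equivalent R (realization R SS) (realization R SF).
Proof.
exists gmap, hmap; split.
- exact: (cont_slice (t0 := 0) (@Phi_cont R d P SS SF f f f _ _ hAB11 (hLc 1) (hLc 1) hS_g hG_g)).
- exact: (cont_slice (t0 := 0) (@Phi_cont R d P SF SS id id id _ _ hAB01 (hLc 0) (hLc 1) hS_h hG_h)).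
- exists H1; split.
  + apply: continuous_subspaceT; exact: (@Phi_cont R d P SS SS f id id _ _ hAB1 hL1 (hLc 1) hS_H hG_H).
  + move=> al; apply: real_eq => z.
    change (sval (H1 (al, 0)) z = sval (hmap (gmap al)) z); rewrite hmap_val gmap_val.
    have [us _ _ ss s1] := supp_listP al.
    by rewrite H1_val A1_0 band11 //; exact: real_ge0.
  + move=> al; apply: real_eq => z.
    have [us _ _ ss s1] := supp_listP al.
    rewrite H1_val A1_1 band01 //; last exact: real_ge0.
    exact: sum_ind2.
- exists (fun w => w.1); split.
  + apply: continuous_subspaceT => w; exact: cvg_fst.
  + move=> be; apply: real_eq => z.
    change (sval be z = sval (gmap (hmap be)) z).
    have hb : sval (hmap be) = sval be by apply: funext => w; exact: hmap_val.
    have [us SFs _ ss s1] := supp_listP be.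
    have [uh _ _ sh _] := supp_listP (hmap be).
    rewrite gmap_val hb.
    have -> : \sum_(p <- supp_list (hmap be)) sval be p * (f p == z)%:R =
              \sum_(p <- supp_list (hmap be)) sval be p * (p == z)%:R.
      apply: eq_big_seq => p _; case: (eqVneq (sval be p) 0) => [->|nz]; first by rewrite !mul0r.
      have pin : p \in supp_list be by apply/negP => /negP /ss; apply/eqP.
      by have [fp _] := SFs p pin; rewrite fp.
    by rewrite sum_ind2 // -hb.
  + by [].
Qed.


Section Case2.
Hypothesis nfy : ~ Fix f y.
Definition cc := f y.
Lemma Scc : SS cc.
Proof.
split => //; split; first exact: xlt_f.
rewrite lt_neqAle fle andbT; apply/eqP => e; exact: nfy e.
Qed.

Definition A2 (t : R) := A2f (A1 t).
Definition B2 (t : R) := B2f (A1 t).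
Lemma hAB2 : forall t, [/\ 0 <= A2 t, A2 t <= B2 t & B2 t <= 1].
Proof. move=> t; exact: AB2 (clamp_01 _). Qed.
Lemma hLA2 : forall t t' : R, `|A2 t - A2 t'| <= `|t - t'| *+ 2.
Proof.
move=> t t'; apply: le_trans (A2_lip (clamp_01 _) (clamp_01 _)) _.
by rewrite lerMn2r clamp_lip1 orbT.
Qed.
Lemma hLB2 : forall t t' : R, `|B2 t - B2 t'| <= `|t - t'| *+ 2.
Proof.
move=> t t'; apply: le_trans (B2_lip (clamp_01 _) (clamp_01 _)) _.
by rewrite lerMn2r clamp_lip1 orbT.
Qed.
Lemma hS2 : forall p, SS p -> [/\ SS (f p), SS (id p) & SS ((fun _ => cc) p)].
Proof. by move=> p h; split => //; [exact: fSS | exact: Scc]. Qed.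
Lemma hG2 : forall (t : R) p q, SS p -> SS q -> (p <= q)%O ->
  [/\ (f p <= f q)%O, (id p <= id q)%O, ((fun _ => cc) p <= (fun _ => cc) q)%O,
      (f p <= id q)%O & (f p <= (fun _ => cc) q)%O]
  /\ (A2 t < B2 t -> B2 t < 1 -> (id p <= (fun _ => cc) q)%O).
Proof.
move=> t p q [_ [_ py]] _ pq; split; last first.
  by move=> h1 h2; exfalso; exact: AB2_ex (clamp_01 _) h1 h2.
split => //=; [exact: fmono | exact: le_trans (fle p) pq | exact: fmono (ltW py)].
Qed.

Definition H2 := @Phi R d P SS SS f id (fun _ => cc) A2 B2 hAB2 hS2 hG2.
Lemma H2_val al t z :
  sval (H2 (al, t)) z = bandsum (sval al) (supp_list al) f id (fun _ => cc) (A2 t) (B2 t) z.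
Proof. by []. Qed.

Lemma delta_in : in_realization SS (fun z : P => (z == cc)%:R : R).
Proof.
split; first by move=> p; rewrite ler0n.
exists [:: cc]; split => //.
- by move=> p; rewrite inE => /eqP ->; exact: Scc.
- by move=> a b; rewrite !inE => /eqP -> /eqP ->; left.
- by move=> p; rewrite inE => /negbTE ->.
- by rewrite big_seq1 eqxx.
Qed.
Definition delta : realization R SS := exist _ _ delta_in.

Lemma case2 : homotopy_equivalent R (realization R SS) pt.
Proof.
exists (fun _ => tt : pt), (fun _ => delta); split.
- exact: cst_continuous.
- exact: cst_continuous.
- exists H2; split.
  + apply: continuous_subspaceT; exact: (@Phi_cont R d P SS SS f id (fun _ => cc) _ _ hAB2 hLA2 hLB2 hS2 hG2).
  + move=> al; apply: real_eq => z.
    change (sval (H2 (al, 0)) z = (z == cc)%:R).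
    have [us _ _ ss s1] := supp_listP al.
    have e1 : A2 0 = 0 by rewrite /A2 A1_0 A2_1.
    have e2 : B2 0 = 0 by rewrite /B2 A1_0 B2_1.
    rewrite H2_val e1 e2 band00 //; last exact: real_ge0.
    by rewrite -big_distrl /= s1 mul1r eq_sym.
  + move=> al; apply: real_eq => z.
    have [us _ _ ss s1] := supp_listP al.
    have e1 : A2 1 = 0 by rewrite /A2 A1_1 A2_0.
    have e2 : B2 1 = 1 by rewrite /B2 A1_1 B2_0.
    rewrite H2_val e1 e2 band01 //; last exact: real_ge0.
    exact: sum_ind2.
- exists (fun _ => tt : pt); split => //.
  + apply: continuous_subspaceT; exact: cst_continuous.
  + by case.
Qed.
End Case2.

End Main.

Unset Implicit Arguments.

Theorem lemma2p7 (R : realType) (d : Order.disp_t) (P : porderType d)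
    (f : P -> P) (x y : P) :
  downward_closure f -> (x < y)%O ->
  f @^-1` [set x] = [set x] ->
  (Fix f y ->
     homotopy_equivalent R (realization R (open_interval setT x y))
                           (realization R (open_interval (Fix f) x y))) /\
  (~ Fix f y ->
     homotopy_equivalent R (realization R (open_interval setT x y)) pt).
Proof.
move=> hf hxy hpre; split => [_|nfy].
  exact: (case1 R y hf hpre).
exact: (case2 R hf hxy hpre nfy).
Qed.
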